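(* Let $\lambda_i$ be a minuscule fundamental weight of a complex simple Lie algebra, let $u\in W^{P_i}$, and let $\alpha$ be a positive root. (I) If $\ell(s_\alpha u)=\ell(u)+1$, then $\alpha$ is a simple root and $(u(\lambda_i),\alpha^\vee)=1$. (II) If $\ell(s_\alpha u)=\ell(u)-(s-1)$, then $\alpha=\psi$ and $(u(\lambda_i),\psi^\vee)=-1$. Here the length $\ell$ is taken in $W^{P_i}$.
   Context: Simple roots $\alpha_1,\dots,\alpha_l$, Weyl group $W$ with Coxeter length $\ell$, $\alpha^\vee=2\alpha/(\alpha,\alpha)$. $\lambda_i$ minuscule: $(\lambda_i,\alpha_j^\vee)=\delta_{ij}$ and $(\lambda_i,\beta^\vee)\le1$ for all positive roots $\beta$. $W_{P_i}$ is the subgroup generated by $s_{\alpha_j}$, $j\ne i$; $W^{P_i}$ is the set of minimal length coset representatives of $W/W_{P_i}$; the length in $W^{P_i}$ of $x\in W$ is the length of the unique $u'\in W^{P_i}$ with $x\in u'W_{P_i}$. $\psi=\sum_j q_j\alpha_j$ is the highest root and $s=1+\sum_j q_j$ is the Coxeter number. *)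

(* Defs.v *)
From HB Require Import structures.
From mathcomp Require Import all_boot all_order all_algebra.
From mathcomp Require Import reals.
Set Implicit Arguments. Unset Strict Implicit. Unset Printing Implicit Defensive.
Import Order.TTheory GRing.Theory Num.Theory.
Local Open Scope ring_scope.

Section RootSystems.
Variables (R : realType) (l : nat).
Implicit Types (v a b : 'rV[R]_l) (M u w x y : 'M[R]_l).

Definition dot v (w : 'rV[R]_l) : R := (v *m w^T) 0 0.
(* (v, a^vee) with a^vee = 2a/(a,a). *)
Definition cop v a : R := 2 * dot v a / dot a a.
(* Reflection s_a, acting on row vectors on the right: v *m refl a = v - (v,a^vee) a.
   Convention: a matrix M represents the linear map v |-> v *m M, so the
   composite f o g of maps represented by F and G is G *m F. *)
Definition refl a : 'M[R]_l := 1%:M - (2 / dot a a) *: (a^T *m a).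

(* Reduced crystallographic root system (spanning is ensured by the base below). *)
Definition root_system (Phi : seq 'rV[R]_l) : Prop :=
  [/\ 0 \notin Phi,
      forall a b, a \in Phi -> b \in Phi -> b *m refl a \in Phi,
      forall a b, a \in Phi -> b \in Phi -> cop b a \in Num.int
    & forall a (c : R), a \in Phi -> c *: a \in Phi -> c = 1 \/ c = -1].

Definition irreducible_rs (Phi : seq 'rV[R]_l) : Prop :=
  forall P : pred 'rV[R]_l,
    (forall a b, a \in Phi -> b \in Phi -> P a -> ~~ P b -> dot a b = 0) ->
    all P Phi \/ all (predC P) Phi.

Definition nncomb (alpha : 'I_l -> 'rV[R]_l) (c : 'I_l -> nat) : 'rV[R]_l :=
  \sum_j (c j)%:R *: alpha j.

Definition is_base (Phi : seq 'rV[R]_l) (alpha : 'I_l -> 'rV[R]_l) : Prop :=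
  [/\ forall j, alpha j \in Phi,
      row_free (\matrix_j alpha j)
    & forall b, b \in Phi -> exists c, b = nncomb alpha c \/ b = - nncomb alpha c].

Definition positive_root (Phi : seq 'rV[R]_l) alpha b : Prop :=
  b \in Phi /\ exists c, b = nncomb alpha c.

Definition minuscule (Phi : seq 'rV[R]_l) alpha (i : 'I_l) (lam : 'rV[R]_l) : Prop :=
  (forall j, cop lam (alpha j) = (i == j)%:R) /\
  (forall b, positive_root Phi alpha b -> cop lam b <= 1).

Definition highest_root (Phi : seq 'rV[R]_l) alpha (psi : 'rV[R]_l) (q : 'I_l -> nat) : Prop :=
  [/\ psi \in Phi, psi = nncomb alpha q
    & forall b, positive_root Phi alpha b -> exists c, psi - b = nncomb alpha c].

Definition coxeter_number (q : 'I_l -> nat) : nat := (1 + \sum_j q j)%N.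

(* Product s_{j1} o s_{j2} o ... o s_{jk} of simple reflections of the word [:: j1; ...; jk]. *)
Definition wmat (alpha : 'I_l -> 'rV[R]_l) (ws : seq 'I_l) : 'M[R]_l :=
  foldr (fun j M => M *m refl (alpha j)) 1%:M ws.

Definition inW alpha w : Prop := exists ws, w = wmat alpha ws.

Definition inWP alpha (i : 'I_l) w : Prop :=
  exists ws, all (fun j => j != i) ws /\ w = wmat alpha ws.

Definition coxlen alpha w (k : nat) : Prop :=
  (exists ws, size ws = k /\ w = wmat alpha ws) /\
  (forall ws, w = wmat alpha ws -> (k <= size ws)%N).

(* u in W^{P_i}: u is of minimal length in its coset u W_{P_i}
   (u o y is represented by y *m u). *)
Definition minrep alpha (i : 'I_l) u : Prop :=
  inW alpha u /\
  forall y k1 k2, inWP alpha i y -> coxlen alpha u k1 -> coxlen alpha (y *m u) k2 ->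
    (k1 <= k2)%N.

(* Length in W^{P_i} of x: length of u' in W^{P_i} with x in u' W_{P_i}. *)
Definition lenP alpha (i : 'I_l) x (k : nat) : Prop :=
  exists u', [/\ minrep alpha i u', (exists y, inWP alpha i y /\ x = y *m u')
                & coxlen alpha u' k].

End RootSystems.

(* Main.v *)
Require Import Defs.
From HB Require Import structures.
From mathcomp Require Import all_boot all_order all_algebra.
From mathcomp Require Import reals.
From mathcomp Require Import zify ring lra.
From Stdlib Require Import Classical.
Set Implicit Arguments. Unset Strict Implicit. Unset Printing Implicit Defensive.
Import Order.TTheory GRing.Theory Num.Theory.
Local Open Scope ring_scope.


Lemma int_m101 (R : realType) (t : R) : t \in Num.int -> -1 <= t -> t <= 1 ->
  t = -1 \/ t = 0 \/ t = 1.
Proof.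
case/intrP=> m -> h1 h2.
have h1' : (-1 <= m)%R by rewrite -(ler_int R) rmorphN rmorph1.
have h2' : (m <= 1)%R by rewrite -(ler_int R) rmorph1.
have : (m = -1 \/ m = 0 \/ m = 1)%R by lia.
by case=> [->|[->|->]]; [left; rewrite rmorphN rmorph1|right;left|right;right; rewrite rmorph1].
Qed.

Section RS.
Variables (R : realType) (l : nat).
Implicit Types (v w a b : 'rV[R]_l) (M W : 'M[R]_l).

Lemma dotC v w : dot v w = dot w v.
Proof. by rewrite /dot -(trmxK (w *m v^T)) trmx_mul trmxK [RHS]mxE. Qed.

Lemma dot_mulmx v w M : dot (v *m M) w = dot v (w *m M^T).
Proof. by rewrite /dot trmx_mul trmxK mulmxA. Qed.

Lemma dotDl v w b : dot (v + w) b = dot v b + dot w b.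
Proof. by rewrite /dot mulmxDl mxE. Qed.
Lemma dotZl (c : R) v b : dot (c *: v) b = c * dot v b.
Proof. by rewrite /dot -scalemxAl mxE. Qed.
Lemma dotNl v b : dot (- v) b = - dot v b.
Proof. by rewrite /dot mulNmx mxE. Qed.
Lemma dotBl v w b : dot (v - w) b = dot v b - dot w b.
Proof. by rewrite dotDl dotNl. Qed.
Lemma dot0l b : dot 0 b = 0.
Proof. by rewrite /dot mul0mx mxE. Qed.
Lemma dotDr v w b : dot b (v + w) = dot b v + dot b w.
Proof. by rewrite dotC dotDl !(dotC b). Qed.
Lemma dotZr (c : R) v b : dot b (c *: v) = c * dot b v.
Proof. by rewrite dotC dotZl dotC. Qed.
Lemma dotNr v b : dot b (- v) = - dot b v.
Proof. by rewrite dotC dotNl dotC. Qed.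
Lemma dotBr v w b : dot b (v - w) = dot b v - dot b w.
Proof. by rewrite dotDr dotNr. Qed.
Lemma dot0r b : dot b 0 = 0.
Proof. by rewrite dotC dot0l. Qed.

Lemma dotE v w : dot v w = \sum_k v 0 k * w 0 k.
Proof. by rewrite /dot mxE; apply: eq_bigr => k _; rewrite mxE. Qed.

Lemma dot_ge0 v : 0 <= dot v v.
Proof. by rewrite dotE sumr_ge0 // => k _; rewrite -expr2 sqr_ge0. Qed.

Lemma dot_eq0 v : (dot v v == 0) = (v == 0).
Proof.
apply/idP/idP; last by move/eqP->; rewrite dot0l.
rewrite dotE psumr_eq0; last by move=> k _; rewrite -expr2 sqr_ge0.
move/allP=> H; apply/eqP/rowP=> k; rewrite mxE.
by have := H k (mem_index_enum k); rewrite /= mulf_eq0 orbb => /eqP.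
Qed.

Lemma dot_gt0 v : v != 0 -> 0 < dot v v.
Proof. by move=> nz; rewrite lt_def dot_eq0 nz dot_ge0. Qed.

Lemma reflE v a : v *m refl a = v - cop v a *: a.
Proof.
rewrite /refl mulmxBr mulmx1 -scalemxAr mulmxA (mx11_scalar (v *m a^T)).
by rewrite mul_scalar_mx scalerA /cop /dot mulrAC mulrC.
Qed.

Lemma mx_ext M W : (forall v, v *m M = v *m W) -> M = W.
Proof. by move=> H; apply/row_matrixP => k; rewrite !rowE H. Qed.

Lemma cop0 v : cop v 0 = 0.
Proof. by rewrite /cop dot0r mulr0 mul0r. Qed.

Lemma copDl v w a : cop (v + w) a = cop v a + cop w a.
Proof. by rewrite /cop dotDl mulrDr mulrDl. Qed.
Lemma copZl (c : R) v a : cop (c *: v) a = c * cop v a.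
Proof. by rewrite /cop dotZl !mulrA (mulrC 2 c). Qed.
Lemma copNl v a : cop (- v) a = - cop v a.
Proof. by rewrite /cop dotNl mulrN mulNr. Qed.
Lemma copBl v w a : cop (v - w) a = cop v a - cop w a.
Proof. by rewrite copDl copNl. Qed.

Lemma cop_self a : a != 0 -> cop a a = 2.
Proof. by move=> nz; rewrite /cop mulfK // gt_eqF // dot_gt0. Qed.

Lemma dot_refl_sym v w a : dot (v *m refl a) w = dot v (w *m refl a).
Proof.
rewrite !reflE dotBl dotBr dotZl dotZr /cop (dotC w a) (dotC a w).
have [->|nz] := eqVneq a 0; first by rewrite !dot0l !dot0r !mulr0 ?mul0r ?subr0.
by field; rewrite gt_eqF // dot_gt0.
Qed.

Lemma refl_refl v a : a != 0 -> v *m refl a *m refl a = v.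
Proof.
move=> nz; rewrite !reflE copBl copZl cop_self //.
by apply/rowP=> k; rewrite !mxE; ring.
Qed.

Lemma refl_conj1 v b c : c != 0 ->
  v *m refl (b *m refl c) = v *m (refl c *m refl b *m refl c).
Proof.
move=> nz; rewrite !mulmxA (reflE (v *m refl c) b) mulmxBl -scalemxAl refl_refl // reflE.
by rewrite /cop dot_refl_sym refl_refl // dot_refl_sym.
Qed.

Lemma refl_opp a : refl (- a) = refl a.
Proof.
apply: mx_ext => v; rewrite !reflE /cop dotNr !dotNl dotNr opprK scalerN.
by rewrite -scaleNr mulrN mulNr opprK.
Qed.

Section Words.
Variable (alpha : 'I_l -> 'rV[R]_l).
Hypothesis Hnz : forall j, alpha j != 0.

Lemma wmat_cons j ws : wmat alpha (j :: ws) = wmat alpha ws *m refl (alpha j).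
Proof. by []. Qed.

Lemma wmat_cat ws1 ws2 : wmat alpha (ws1 ++ ws2) = wmat alpha ws2 *m wmat alpha ws1.
Proof.
elim: ws1 => [|j ws1 IH]; first by rewrite /wmat /= mulmx1.
by rewrite cat_cons wmat_cons IH wmat_cons mulmxA.
Qed.

Lemma wmat_rev_cons j ws : wmat alpha (rev (j :: ws)) = refl (alpha j) *m wmat alpha (rev ws).
Proof. by rewrite rev_cons -cats1 wmat_cat /wmat /= mul1mx. Qed.

Lemma wmat_inv v ws : v *m wmat alpha ws *m wmat alpha (rev ws) = v.
Proof.
elim: ws v => [|j ws IH] v; first by rewrite /wmat /= !mulmx1.
by rewrite wmat_cons wmat_rev_cons !mulmxA (refl_refl _ (Hnz j)).
Qed.

Lemma wmat_inv' v ws : v *m wmat alpha (rev ws) *m wmat alpha ws = v.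
Proof. by rewrite -{2}(revK ws) wmat_inv. Qed.

Lemma dot_wmat v w ws : dot (v *m wmat alpha ws) w = dot v (w *m wmat alpha (rev ws)).
Proof.
elim: ws v w => [|j ws IH] v w; first by rewrite /wmat /= !mulmx1.
by rewrite wmat_cons wmat_rev_cons mulmxA dot_refl_sym IH mulmxA.
Qed.

Lemma dot_wmat2 v w ws : dot (v *m wmat alpha ws) (w *m wmat alpha ws) = dot v w.
Proof. by rewrite dot_wmat wmat_inv. Qed.

Lemma cop_wmat2 v w ws : cop (v *m wmat alpha ws) (w *m wmat alpha ws) = cop v w.
Proof. by rewrite /cop !dot_wmat2. Qed.

Lemma refl_wmat b ws :
  refl (b *m wmat alpha (rev ws)) = wmat alpha ws *m refl b *m wmat alpha (rev ws).
Proof.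
elim: ws b => [|j ws IH] b; first by rewrite /wmat /= !mulmx1 mul1mx.
rewrite wmat_rev_cons mulmxA IH wmat_cons.
have -> : refl (b *m refl (alpha j)) = refl (alpha j) *m refl b *m refl (alpha j).
  by apply: mx_ext => v; rewrite refl_conj1.
by rewrite !mulmxA.
Qed.

Lemma refl_wmat' b ws :
  refl (b *m wmat alpha (rev ws)) *m wmat alpha ws = wmat alpha ws *m refl b.
Proof.
rewrite refl_wmat; apply: mx_ext => v.
by rewrite !mulmxA wmat_inv'.
Qed.
End Words.
End RS.


Section RootSys.
Variables (R : realType) (l : nat) (Phi : seq 'rV[R]_l) (alpha : 'I_l -> 'rV[R]_l)
  (i : 'I_l) (lam : 'rV[R]_l).
Hypotheses (HR : root_system Phi) (HB : is_base Phi alpha) (HM : minuscule Phi alpha i lam).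
Implicit Types (v w a b : 'rV[R]_l) (M W : 'M[R]_l).

Lemma Phi_nz b : b \in Phi -> b != 0.
Proof. by case: HR => H0 _ _ _ Hb; apply: contraNneq H0 => <-. Qed.
Lemma Phi_refl a b : a \in Phi -> b \in Phi -> b *m refl a \in Phi.
Proof. by case: HR => _ H _ _; apply: H. Qed.
Lemma Phi_int a b : a \in Phi -> b \in Phi -> cop b a \in Num.int.
Proof. by case: HR => _ _ H _; apply: H. Qed.
Lemma Phi_red a (c : R) : a \in Phi -> c *: a \in Phi -> c = 1 \/ c = -1.
Proof. by case: HR => _ _ _ H; apply: H. Qed.
Lemma alpha_Phi j : alpha j \in Phi.
Proof. by case: HB. Qed.
Lemma Hnz j : alpha j != 0.
Proof. exact: Phi_nz (alpha_Phi j). Qed.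

Lemma Phi_wmat b ws : b \in Phi -> b *m wmat alpha ws \in Phi.
Proof.
elim: ws b => [|j ws IH] b Hb; first by rewrite /wmat /= mulmx1.
by rewrite wmat_cons mulmxA; apply: Phi_refl; [exact: alpha_Phi | exact: IH].
Qed.

Definition Amx : 'M[R]_l := \matrix_j alpha j.
Lemma Amx_unit : Amx \in unitmx.
Proof. by case: HB => _ H _; rewrite -row_free_unit. Qed.

Definition comb (r : 'I_l -> R) : 'rV[R]_l := \sum_j r j *: alpha j.
Lemma comb_mx r : comb r = (\row_j r j) *m Amx.
Proof. by rewrite mulmx_sum_row; apply: eq_bigr => j _; rewrite rowK mxE. Qed.

Definition coordf v (j : 'I_l) : R := (v *m invmx Amx) 0 j.
Lemma coordD v w j : coordf (v + w) j = coordf v j + coordf w j.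
Proof. by rewrite /coordf mulmxDl mxE. Qed.
Lemma coordZ (c : R) v j : coordf (c *: v) j = c * coordf v j.
Proof. by rewrite /coordf -scalemxAl mxE. Qed.
Lemma coordN v j : coordf (- v) j = - coordf v j.
Proof. by rewrite /coordf mulNmx mxE. Qed.
Lemma coordB v w j : coordf (v - w) j = coordf v j - coordf w j.
Proof. by rewrite coordD coordN. Qed.
Lemma coordf0 j : coordf 0 j = 0.
Proof. by rewrite /coordf mul0mx mxE. Qed.
Lemma coord_comb r j : coordf (comb r) j = r j.
Proof. by rewrite /coordf comb_mx mulmxK ?Amx_unit // mxE. Qed.
Lemma coord_nncomb c j : coordf (nncomb alpha c) j = (c j)%:R.
Proof. exact: coord_comb. Qed.
Lemma coord_ext v w : (forall j, coordf v j = coordf w j) -> v = w.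
Proof.
move=> H; rewrite -(mulmxKV Amx_unit v) -(mulmxKV Amx_unit w); congr (_ *m _).
by apply/rowP=> j; apply: H.
Qed.
Lemma vec_comb v : v = comb (coordf v).
Proof. by apply: coord_ext => j; rewrite coord_comb. Qed.
Lemma coord_alpha k j : coordf (alpha k) j = (j == k)%:R.
Proof.
have -> : alpha k = comb (fun m => (m == k)%:R).
  rewrite /comb (bigD1 k) //= eqxx scale1r big1 ?addr0 // => m /negbTE ->.
  by rewrite scale0r.
by rewrite coord_comb.
Qed.

Definition ht v : R := \sum_j coordf v j.
Lemma htD v w : ht (v + w) = ht v + ht w.
Proof. by rewrite /ht -big_split; apply: eq_bigr => j _; rewrite coordD. Qed.
Lemma htZ (c : R) v : ht (c *: v) = c * ht v.
Proof. by rewrite /ht mulr_sumr; apply: eq_bigr => j _; rewrite coordZ. Qed.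
Lemma htN v : ht (- v) = - ht v.
Proof. by rewrite -scaleN1r htZ mulN1r. Qed.
Lemma htB v w : ht (v - w) = ht v - ht w.
Proof. by rewrite htD htN. Qed.
Lemma ht_nncomb c : ht (nncomb alpha c) = (\sum_j c j)%:R.
Proof. by rewrite natr_sum; apply: eq_bigr => j _; rewrite coord_nncomb. Qed.
Lemma ht_alpha k : ht (alpha k) = 1.
Proof.
rewrite /ht (bigD1 k) //= coord_alpha eqxx big1 ?addr0 // => m /negbTE Hm.
by rewrite coord_alpha Hm.
Qed.

Definition pos b := exists c, b = nncomb alpha c.

Lemma pos_alpha j : pos (alpha j).
Proof.
exists (fun m => (m == j : nat)); apply: coord_ext => m.
by rewrite coord_nncomb coord_alpha; case: (m == j).
Qed.

Lemma Phi_pos b : b \in Phi -> pos b \/ pos (- b).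
Proof.
case: HB => _ _ H /H [c [->|->]]; first by left; exists c.
by right; exists c; rewrite opprK.
Qed.

Lemma pos_coord b j : pos b -> 0 <= coordf b j.
Proof. by case=> c ->; rewrite coord_nncomb ler0n. Qed.

Lemma pos_neg b : b \in Phi -> pos b -> pos (- b) -> False.
Proof.
move=> Hb Pb Nb; have := Phi_nz Hb; apply/negP; rewrite negbK; apply/eqP.
apply: coord_ext => j; rewrite coordf0.
have := pos_coord j Pb; have := pos_coord j Nb; rewrite coordN; lra.
Qed.

Lemma ht_pos b : b \in Phi -> pos b -> 1 <= ht b.
Proof.
move=> Hb [c Ec]; rewrite Ec ht_nncomb ler1n lt0n.
apply: contra (Phi_nz Hb); rewrite sum_nat_eq0 => /forallP H.
rewrite Ec; apply/eqP; apply: coord_ext => j; rewrite coordf0 coord_nncomb.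
by have := H j; rewrite implyTb => /eqP ->.
Qed.

Lemma dot_comb v r : dot v (comb r) = \sum_j r j * dot v (alpha j).
Proof.
apply: (big_ind2 (fun x y => dot v x = y)); first by rewrite dot0r.
  by move=> x1 x2 y1 y2 <- <-; rewrite dotDr.
by move=> j _; rewrite dotZr.
Qed.


Lemma dd_gt0 b : b \in Phi -> 0 < dot b b.
Proof. by move=> Hb; apply: dot_gt0; apply: Phi_nz. Qed.

Lemma copNr v a : cop v (- a) = - cop v a.
Proof. by rewrite /cop dotNr dotNl dotNr opprK mulrN mulNr. Qed.

Lemma cop_eq0 v b : b \in Phi -> (cop v b = 0) <-> (dot v b = 0).
Proof.
move=> Hb; have := dd_gt0 Hb; rewrite /cop => H; split; last by move=> ->; rewrite mulr0 mul0r.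
move/eqP; rewrite mulf_eq0 invr_eq0 (gt_eqF H) orbF mulf_eq0 orbC => /orP [/eqP //|].
by rewrite pnatr_eq0.
Qed.

Lemma cop_sign v b : b \in Phi -> (0 < cop v b) = (0 < dot v b).
Proof.
move=> Hb; have := dd_gt0 Hb; rewrite /cop => H.
by rewrite pmulr_lgt0 ?invr_gt0 // pmulr_rgt0.
Qed.

Lemma cop_lam_alpha j : cop lam (alpha j) = (i == j)%:R.
Proof. by case: HM => H _; apply: H. Qed.

Lemma dot_lam_alpha_ne j : j != i -> dot lam (alpha j) = 0.
Proof.
move=> Hj; apply/(cop_eq0 _ (alpha_Phi j)).
by rewrite cop_lam_alpha eq_sym (negbTE Hj).
Qed.

Lemma dot_lam_alpha_i : 0 < dot lam (alpha i).
Proof. by rewrite -cop_sign ?alpha_Phi // cop_lam_alpha eqxx ltr01. Qed.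

Lemma dot_lam_alpha_ge0 j : 0 <= dot lam (alpha j).
Proof.
have [->|Hj] := eqVneq j i; first exact: ltW dot_lam_alpha_i.
by rewrite dot_lam_alpha_ne.
Qed.

Lemma dot_lam_pos b : pos b -> 0 <= dot lam b.
Proof.
case=> c ->; rewrite dot_comb; apply: sumr_ge0 => j _.
by rewrite mulr_ge0 ?ler0n ?dot_lam_alpha_ge0.
Qed.

Lemma cop_lam_pos b : b \in Phi -> pos b -> 0 <= cop lam b <= 1.
Proof.
move=> Hb Pb; apply/andP; split.
  rewrite /cop mulr_ge0 ?invr_ge0 ?(ltW (dd_gt0 Hb)) // mulr_ge0 //.
  exact: dot_lam_pos.
by case: HM => _ H; apply: H; split => //; case: Pb => c ->; exists c.
Qed.

Lemma Phi_opp b : b \in Phi -> - b \in Phi.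
Proof.
move=> Hb; have -> : - b = b *m refl b.
  rewrite reflE cop_self ?Phi_nz //; apply/rowP => k; rewrite !mxE; ring.
exact: Phi_refl.
Qed.

Lemma cop_lam_bound b : b \in Phi -> -1 <= cop lam b <= 1.
Proof.
move=> Hb; case: (Phi_pos Hb) => P.
  by have /andP[h1 h2] := cop_lam_pos Hb P; apply/andP; split => //; lra.
have Hb' : - b \in Phi by apply: Phi_opp.
have /andP[h1 h2] := cop_lam_pos Hb' P; rewrite copNr in h1 h2.
by apply/andP; split; lra.
Qed.

Lemma coord_refl b k j :
  coordf (b *m refl (alpha k)) j = coordf b j - cop b (alpha k) * (j == k)%:R.
Proof. by rewrite reflE coordB coordZ coord_alpha. Qed.

Lemma ht_refl b k : ht (b *m refl (alpha k)) = ht b - cop b (alpha k).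
Proof. by rewrite reflE htB htZ ht_alpha mulr1. Qed.

Lemma pos_refl b k : b \in Phi -> pos b -> b != alpha k -> pos (b *m refl (alpha k)).
Proof.
move=> Hb Pb Hne; have Hb' := Phi_refl (alpha_Phi k) Hb.
case: (Phi_pos Hb') => // Nb'; exfalso.
have Hc : forall m, m != k -> coordf b m = 0.
  move=> m Hm; have := pos_coord m Pb; have := pos_coord m Nb'.
  rewrite coordN coord_refl (negbTE Hm) mulr0 subr0; lra.
have Eb : b = coordf b k *: alpha k.
  apply: coord_ext => m; rewrite coordZ coord_alpha.
  by have [->|Hm] := eqVneq m k; [rewrite mulr1 | rewrite Hc // mulr0].
case: (Phi_red (alpha_Phi k) (c := coordf b k)); first by rewrite -Eb.
  by move=> E; move: Hne; rewrite Eb E scale1r eqxx.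
by move=> E; have := pos_coord k Pb; rewrite E; lra.
Qed.

Lemma int_ge1 (t : R) : t \in Num.int -> 0 < t -> 1 <= t.
Proof.
case/intrP=> m -> h.
have h' : (0 < m)%R by rewrite -(ltr_int R).
have : (1 <= m)%R by lia.
by rewrite -(ler_int R).
Qed.

Lemma descent (J : pred 'I_l) N b : b \in Phi -> pos b ->
  (forall m, ~~ J m -> coordf b m = 0) -> ht b <= N%:R ->
  exists j ws, [/\ J j, all J ws & b = alpha j *m wmat alpha ws].
Proof.
elim: N b => [|N IH] b Hb Pb HJ Hh.
  by have := ht_pos Hb Pb; lra.
have E : dot b b = \sum_j coordf b j * dot b (alpha j) by rewrite -dot_comb -vec_comb.
case: (pickP (fun m => 0 < coordf b m * dot b (alpha m))) => [m Hm | H0]; last first.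
  have : \sum_j coordf b j * dot b (alpha j) <= 0.
    by apply: sumr_le0 => j _; rewrite leNgt H0.
  by rewrite -E; have := dd_gt0 Hb; lra.
have Hc := pos_coord m Pb.
have Hd : 0 < dot b (alpha m) by nra.
have Jm : J m.
  by apply/negPn/negP => /HJ Hz; move: Hm; rewrite /= Hz mul0r ltxx.
have [-> | Hne] := eqVneq b (alpha m).
  by exists m, [::]; split => //; rewrite /wmat /= mulmx1.
set n := cop b (alpha m).
have Hn : 1 <= n.
  apply: int_ge1; first exact: Phi_int (alpha_Phi m) Hb.
  by rewrite /n cop_sign ?alpha_Phi.
have Hb' := Phi_refl (alpha_Phi m) Hb.
have Pb' := pos_refl Hb Pb Hne.
have HJ' : forall p, ~~ J p -> coordf (b *m refl (alpha m)) p = 0.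
  move=> p Hp; rewrite coord_refl HJ //.
  have -> : (p == m) = false by apply/negP => /eqP E'; move: Hp; rewrite E' Jm.
  by rewrite mulr0 subr0.
have Hh' : ht (b *m refl (alpha m)) <= N%:R.
  by rewrite ht_refl; move: Hh; rewrite -/n -addn1 natrD; lra.
have [j [ws [Jj Jws Eb']]] := IH _ Hb' Pb' HJ' Hh'.
exists j, (m :: ws); split => //; first by rewrite /= Jm.
by rewrite wmat_cons mulmxA -Eb' refl_refl // Hnz.
Qed.

Lemma conj_simple b : b \in Phi -> pos b -> exists j ws, b = alpha j *m wmat alpha ws.
Proof.
move=> Hb Pb; case: (Pb) => c Ec.
have Hh : ht b <= (\sum_j c j)%:R by rewrite Ec ht_nncomb.
have HJ : forall m, ~~ predT m -> coordf b m = 0 by [].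
have [j [ws [_ _ E]]] := @descent predT (\sum_j c j) b Hb Pb HJ Hh.
by exists j, ws.
Qed.

Lemma cop_orbit_int ws j : cop (lam *m wmat alpha ws) (alpha j) \in Num.int.
Proof.
elim: ws j => [|k ws IH] j; first by rewrite /wmat /= mulmx1 cop_lam_alpha natr_int.
rewrite wmat_cons mulmxA reflE copBl copZl.
apply: rpredB; first exact: IH. apply: rpredM; first exact: IH. by apply: Phi_int; apply: alpha_Phi.
Qed.

Lemma cop_orbit_root_int ws b : b \in Phi -> cop (lam *m wmat alpha ws) b \in Num.int.
Proof.
have H : forall b, b \in Phi -> pos b -> cop (lam *m wmat alpha ws) b \in Num.int.
  move=> b' Hb' Pb'; have [j [ws' ->]] := conj_simple Hb' Pb'.
  rewrite -(wmat_inv' Hnz (lam *m wmat alpha ws) ws') (cop_wmat2 Hnz).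
  by rewrite -mulmxA -wmat_cat cop_orbit_int.
move=> Hb; case: (Phi_pos Hb) => P; first exact: H.
by rewrite -(opprK b) copNr rpredN H // Phi_opp.
Qed.

Lemma lam_WP ws : all (fun j => j != i) ws -> lam *m wmat alpha ws = lam.
Proof.
elim: ws => [|k ws IH]; first by rewrite /wmat /= mulmx1.
move=> /andP [Hk Hws]; rewrite wmat_cons mulmxA IH // reflE cop_lam_alpha.
by rewrite eq_sym (negbTE Hk) scale0r subr0.
Qed.

Lemma inWP_lam y : inWP alpha i y -> lam *m y = lam.
Proof. by case=> ws [Hws ->]; apply: lam_WP. Qed.

Lemma parabolic b : b \in Phi -> dot lam b = 0 ->
  exists ws, all (fun j => j != i) ws /\ refl b = wmat alpha ws.
Proof.
have H : forall b, b \in Phi -> pos b -> dot lam b = 0 ->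
    exists ws, all (fun j => j != i) ws /\ refl b = wmat alpha ws.
  move=> b' Hb' Pb' Hd; case: (Pb') => c Ec.
  have Hci : coordf b' i = 0.
    move: Hd; rewrite {1}(vec_comb b') dot_comb (bigD1 i) //= big1 ?addr0.
      by move/eqP; rewrite mulf_eq0 (gt_eqF dot_lam_alpha_i) orbF => /eqP.
    by move=> j Hj; rewrite dot_lam_alpha_ne // mulr0.
  have HJ : forall m, ~~ (m != i) -> coordf b' m = 0 by move=> m; rewrite negbK => /eqP ->.
  have Hh : ht b' <= (\sum_j c j)%:R by rewrite Ec ht_nncomb.
  have [j [ws [Jj Jws E]]] := @descent (fun j => j != i) (\sum_j c j) b' Hb' Pb' HJ Hh.
  exists (ws ++ j :: rev ws); split; first by rewrite all_cat /= all_rev Jws Jj.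
  rewrite E -{1}(revK ws) (refl_wmat Hnz) revK wmat_cat wmat_cons.
  done.
move=> Hb Hd; case: (Phi_pos Hb) => P; first exact: H.
rewrite -refl_opp; apply: H => //; first exact: Phi_opp.
by rewrite dotNr Hd oppr0.
Qed.

Definition f x := ht (lam - lam *m x).

Lemma f_step ws j : f (wmat alpha (j :: ws)) = f (wmat alpha ws) + cop (lam *m wmat alpha ws) (alpha j).
Proof.
rewrite /f wmat_cons mulmxA reflE.
set mu := lam *m wmat alpha ws; set t := cop mu (alpha j).
have -> : lam - (mu - t *: alpha j) = (lam - mu) + t *: alpha j.
  by apply/rowP => k; rewrite !mxE; ring.
by rewrite htD htZ ht_alpha mulr1.
Qed.

Lemma cop_orbit_bound ws b : b \in Phi -> -1 <= cop (lam *m wmat alpha ws) b <= 1.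
Proof.
move=> Hb; rewrite -(cop_wmat2 Hnz _ _ (rev ws)) (wmat_inv Hnz).
by apply: cop_lam_bound; apply: Phi_wmat.
Qed.

Lemma f_nil : f (wmat alpha [::]) = 0.
Proof. by rewrite /f /wmat /= mulmx1 subrr /ht big1 // => j _; rewrite coordf0. Qed.

Lemma f_le ws : f (wmat alpha ws) <= (size ws)%:R.
Proof.
elim: ws => [|j ws IH]; first by rewrite f_nil.
rewrite f_step /= -natr1.
by have /andP[_ h] := cop_orbit_bound ws (alpha_Phi j); lra.
Qed.

Lemma f_WP y x : inWP alpha i y -> f (y *m x) = f x.
Proof. by move=> Hy; rewrite /f mulmxA inWP_lam. Qed.

Lemma pos_opp_false b : b \in Phi -> pos b -> pos (- b) -> False.
Proof. exact: pos_neg. Qed.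

Lemma exchange ws b : b \in Phi -> pos b -> pos (- (b *m wmat alpha (rev ws))) ->
  exists ws', (size ws').+1 = size ws /\ wmat alpha ws *m refl b = wmat alpha ws'.
Proof.
elim: ws b => [|k ws IH] b Hb Pb Nb.
  by exfalso; move: Nb; rewrite /wmat /= mulmx1; apply: pos_neg.
have [-> | Hne] := eqVneq b (alpha k).
  exists ws; split => //; rewrite wmat_cons; apply: mx_ext => v.
  by rewrite !mulmxA refl_refl ?Hnz.
have Hb' := Phi_refl (alpha_Phi k) Hb.
have Pb' := pos_refl Hb Pb Hne.
have Nb' : pos (- (b *m refl (alpha k) *m wmat alpha (rev ws))).
  by move: Nb; rewrite wmat_rev_cons mulmxA.
have [ws' [Hs E]] := IH _ Hb' Pb' Nb'.
exists (k :: ws'); split; first by rewrite /= Hs.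
rewrite !wmat_cons -E; apply: mx_ext => v.
by rewrite !mulmxA (refl_conj1 _ _ (Hnz k)) !mulmxA (refl_refl _ (Hnz k)).
Qed.

Lemma claimC ws : exists y ws', [/\ inWP alpha i y, y *m wmat alpha ws = wmat alpha ws'
  & (size ws')%:R = f (wmat alpha ws)].
Proof.
elim: ws => [|j ws [y' [ws'' [Hy' E Hs]]]].
  exists 1%:M, [::]; split; first by exists [::].
    by rewrite mul1mx.
  by rewrite f_nil.
have Hlam : lam *m wmat alpha ws'' = lam *m wmat alpha ws.
  by rewrite -E mulmxA inWP_lam.
have Hf : f (wmat alpha (j :: ws)) = (size ws'')%:R + cop (lam *m wmat alpha ws'') (alpha j).
  by rewrite f_step Hs Hlam.
set c := cop (lam *m wmat alpha ws'') (alpha j) in Hf.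
have Hci : c \in Num.int by apply: cop_orbit_int.
have /andP [Hc1 Hc2] : -1 <= c <= 1 by apply: cop_orbit_bound; apply: alpha_Phi.
set g := alpha j *m wmat alpha (rev ws'').
have Hg : g \in Phi by apply: Phi_wmat; apply: alpha_Phi.
have Hcg : cop lam g = c.
  by rewrite /c -(cop_wmat2 Hnz (lam *m wmat alpha ws'') (alpha j) (rev ws'')) (wmat_inv Hnz).
have EW : y' *m wmat alpha (j :: ws) = wmat alpha ws'' *m refl (alpha j).
  by rewrite wmat_cons mulmxA E.
case: (int_m101 Hci Hc1 Hc2) => [Ec | [Ec | Ec]].
- have Ng : pos (- g).
    case: (Phi_pos Hg) => // Pg; exfalso.
    by have /andP [h _] := cop_lam_pos Hg Pg; move: h; rewrite Hcg Ec; lra.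
  have [ws3 [Hs3 E3]] := exchange (alpha_Phi j) (pos_alpha j) Ng.
  exists y', ws3; split => //; first by rewrite EW.
  by rewrite Hf Ec -Hs3 -natr1; ring.
- have Hd : dot lam g = 0 by apply/(cop_eq0 _ Hg); rewrite Hcg.
  have [wsJ [HJ EJ]] := parabolic Hg Hd.
  case: Hy' => [wsy [Hwsy Ey]].
  exists (wmat alpha wsJ *m y'), ws''; split.
  + by exists (wsy ++ wsJ); rewrite all_cat HJ Hwsy wmat_cat Ey.
  + rewrite -mulmxA EW -(refl_wmat' Hnz) -EJ mulmxA.
    by apply: mx_ext => v; rewrite !mulmxA -/g (refl_refl _ (Phi_nz Hg)).
  + by rewrite Hf Ec addr0.
- exists y', (j :: ws''); split => //; try by rewrite EW.
  by rewrite Hf Ec /= -natr1.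
Qed.

End RootSys.


Lemma min_ex (P : nat -> Prop) n : P n -> exists m, P m /\ forall m', P m' -> (m <= m')%N.
Proof.
elim/ltn_ind: n => n IH Pn.
case: (classic (exists m', (m' < n)%N /\ P m')) => [[m' [Hlt Pm']] | Hno].
  exact: IH Hlt Pm'.
exists n; split => // m' Pm'; rewrite leqNgt; apply/negP => Hlt.
by apply: Hno; exists m'.
Qed.

Section Final.
Variables (R : realType) (l : nat) (Phi : seq 'rV[R]_l) (alpha : 'I_l -> 'rV[R]_l)
  (i : 'I_l) (lam : 'rV[R]_l).
Hypotheses (HR : root_system Phi) (HB : is_base Phi alpha) (HM : minuscule Phi alpha i lam).

Lemma coxlen_ex ws : exists k, coxlen alpha (wmat alpha ws) k /\ (k <= size ws)%N.
Proof.
have [m [[ws' [Hs E]] Hmin]] := @min_ex (fun n => exists ws', size ws' = n /\ wmat alpha ws = wmat alpha ws') (size ws) (ex_intro _ ws (conj erefl erefl)).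
exists m; split.
  split; first by exists ws'; rewrite -E.
  by move=> ws2 E2; apply: Hmin; exists ws2.
by apply: Hmin; exists ws.
Qed.

Lemma lenP_f x k : lenP alpha i x k -> k%:R = f alpha lam x.
Proof.
case=> u' [[[ws0 Eu] Hmin] [y [Hy Ex]] [[ws1 [Hs1 E1]] Hall]].
rewrite Ex (f_WP HM) //.
have [y0 [ws' [Hy0 E0 Hs']]] := claimC HR HB HM ws0.
have [k2 [Hk2 Hk2s]] := coxlen_ex ws'.
have Hkk2 : (k <= k2)%N.
  apply: (Hmin y0) => //; first by split; [exists ws1 | ].
  by rewrite Eu E0.
apply/eqP; rewrite eq_le; apply/andP; split.
  rewrite Eu -Hs' ler_nat; exact: leq_trans Hkk2 Hk2s.
by rewrite E1 -Hs1; apply: (f_le HR HB HM).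
Qed.

End Final.

Unset Implicit Arguments.

Theorem proposition17 (R : realType) (l : nat) (Phi : seq 'rV[R]_l)
    (alpha : 'I_l -> 'rV[R]_l) (i : 'I_l) (lam : 'rV[R]_l)
    (psi : 'rV[R]_l) (q : 'I_l -> nat) (u : 'M[R]_l) (a : 'rV[R]_l) :
  root_system Phi -> irreducible_rs Phi -> is_base Phi alpha ->
  minuscule Phi alpha i lam -> highest_root Phi alpha psi q ->
  minrep alpha i u -> positive_root Phi alpha a ->
  (forall k k', lenP alpha i u k -> lenP alpha i (u *m refl a) k' ->
     k' = k.+1 ->
     (exists j, a = alpha j) /\ cop (lam *m u) a = 1) /\
  (forall k k', lenP alpha i u k -> lenP alpha i (u *m refl a) k' ->
     k = (k' + (coxeter_number q - 1))%N ->
     a = psi /\ cop (lam *m u) psi = -1).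
Proof.
move=> HR _ HB HM [Hpsi Epsi Hhigh] Hu Ha.
have [[ws0 Eu] _] := Hu.
case: (Ha) => Ha_in [c Ec].
set t := cop (lam *m u) a.
have Hstep : f alpha lam (u *m refl a) = f alpha lam u + t * ht alpha a.
  rewrite /f mulmxA reflE -/t.
  have -> : lam - (lam *m u - t *: a) = (lam - lam *m u) + t *: a.
    by apply/rowP => k; rewrite !mxE; ring.
  by rewrite htD htZ.
have Hint : t \in Num.int by rewrite /t Eu; apply: (cop_orbit_root_int HR HB HM).
have /andP [Ht1 Ht2] : -1 <= t <= 1 by rewrite /t Eu; apply: (cop_orbit_bound HR HB HM).
have Hh : 1 <= ht alpha a by apply: (ht_pos HR HB) => //; exists c.
have Hhc : ht alpha a = (\sum_j c j)%:R by rewrite Ec (ht_nncomb HB).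
split.
- move=> k k' Hk Hk' Ek.
  have := lenP_f HR HB HM Hk; have := lenP_f HR HB HM Hk'.
  rewrite Ek Hstep -natr1 => E1 E2.
  have Eth : t * ht alpha a = 1 by rewrite -E2 in E1; lra.
  case: (int_m101 Hint Ht1 Ht2) => [Et | [Et | Et]]; rewrite Et in Eth.
  + by exfalso; clear -Eth Hh; lra.
  + by exfalso; move: Eth; rewrite mul0r => /eqP; rewrite eq_sym oner_eq0.
  split => //.
  rewrite mul1r Hhc natr_sum in Eth.
  have [j [_ Hj Ho]] := natr_sum_eq1 (fun m _ => natr_nat R (c m)) Eth.
  exists j; rewrite Ec; apply: (coord_ext HB) => m.
  rewrite (coord_nncomb HB) (coord_alpha HB).
  by have [->|Hm] := eqVneq m j; [rewrite Hj | rewrite Ho].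
- move=> k k' Hk Hk' Ek.
  have := lenP_f HR HB HM Hk; have := lenP_f HR HB HM Hk'.
  have Eq : (coxeter_number q - 1)%N = (\sum_j q j)%N by rewrite /coxeter_number add1n subn1.
  rewrite Ek Eq natrD Hstep => E1 E2.
  have [c' Ec'] := Hhigh a Ha.
  have Hpa : ht alpha psi - ht alpha a = (\sum_j c' j)%:R by rewrite -htB Ec' (ht_nncomb HB).
  have Hps : ht alpha psi = (\sum_j q j)%:R by rewrite Epsi (ht_nncomb HB).
  have Hc'0 : 0 <= ((\sum_j c' j)%:R : R) by rewrite ler0n.
  have Eth : t * ht alpha a = - (\sum_j q j)%:R by rewrite -E2 in E1; lra.
  have Hha : ht alpha a = ht alpha psi by nra.
  have Ett : t = -1 by nra.
  have Hz : (\sum_j c' j)%N = 0%N.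
    by apply/eqP; rewrite -(eqr_nat R) -Hpa Hha subrr.
  have Eap : a = psi.
    apply/eqP; rewrite eq_sym -subr_eq0 Ec'; apply/eqP.
    apply: (coord_ext HB) => m; rewrite (coord_nncomb HB) coordf0.
    move/eqP: Hz; rewrite sum_nat_eq0 => /forallP /(_ m) /eqP ->; done.
  by split => //; rewrite -Eap.
Qed.
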